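(* Let $\Omega\subseteq\mathbb{R}^d$ be compact and convex with non-empty interior $\Omega^\circ$, and let $p_0,p_1$ be Lebesgue densities supported on $\Omega$ that are continuous, uniformly bounded and bounded away from zero on $\Omega$. For $t\in(0,1)$, $z\in\Omega$ let $S_t(z)=\{\delta: z-t\delta\in\Omega,\ z+(1-t)\delta\in\Omega\}$ and for $z\in\Omega^\circ$ $$v(t,z)=\frac{\int_{S_t(z)}\delta\,p_0(z-t\delta)p_1(z+(1-t)\delta)d\delta}{\int_{S_t(z)}p_0(z-t\delta)p_1(z+(1-t)\delta)d\delta}.$$ Let $\hat p_0,\hat p_1$ be estimators (based on $n$ observations) of $p_0,p_1$, redefined to be $0$ outside $\Omega$, let $$r_n=\sup_{x\in\Omega}\max\Big\{\Big|\ln\frac{\hat p_0(x)}{p_0(x)}\Big|,\Big|\ln\frac{\hat p_1(x)}{p_1(x)}\Big|\Big\},$$ and define $\hat v^{\mathrm{den}}(t,z)$ by the same formula as $v(t,z)$ with $p_0,p_1$ replaced by $\hat p_0,\hat p_1$. Then for all $n\ge1$, $$\|\hat v^{\mathrm{den}}-v\|_\infty=\sup_{t\in[0,1],\,z\in\Omega^\circ}\|\hat v^{\mathrm{den}}(t,z)-v(t,z)\|\le2\,\mathrm{diam}(\Omega)(e^{4r_n}-1).$$ If $r_n=o_p(1)$ as $n\to\infty$, then $\sup_{t\in[0,1],\,z\in\Omega^\circ}\|\hat v^{\mathrm{den}}(t,z)-v(t,z)\|=O_p(r_n)$ as $n\to\infty$.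
   Context: The estimators need not be densities; $\hat v^{\mathrm{den}}$ is the density-based estimator of the rectified flow velocity field. *)

(* Defs.v *)
From HB Require Import structures.
From mathcomp Require Import all_boot all_order all_algebra.
From mathcomp Require Import all_classical all_reals all_analysis.
Set Implicit Arguments. Unset Strict Implicit. Unset Printing Implicit Defensive.
Import Order.TTheory GRing.Theory Num.Theory.
Import numFieldNormedType.Exports.
Local Open Scope classical_set_scope.
Local Open Scope ring_scope.

Section Defs.
Variable R : realType.

(* Borel sigma-algebra on R^d: generated by the coordinate maps. *)
Definition rV_measurable (d : nat) (A : set 'rV[R]_d) : Prop :=
  g_sigma_preimage (fun (i : 'I_d) (x : 'rV[R]_d) => x ord0 i) A.

Definition rV_mfun (d : nat) (f : 'rV[R]_d -> R) : Prop :=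
  forall B : set R, measurable B -> rV_measurable (f @^-1` B).

(* Lebesgue integral over R^d, computed as an iterated one-dimensional
   Lebesgue integral (equal to the d-dimensional Lebesgue integral for
   integrable integrands by Fubini). *)
Fixpoint iint (d : nat) : ('rV[R]_d -> R) -> R :=
  match d return ('rV[R]_d -> R) -> R with
  | 0 => fun f => f 0
  | d'.+1 => fun f =>
      Rintegral (@lebesgue_measure R) setT
        (fun x : R => iint (fun y : 'rV[R]_d' =>
                              f (row_mx (\row_(j < 1) x) y)))
  end.

Definition norm2 (d : nat) (x : 'rV[R]_d) : R :=
  Num.sqrt (\sum_(i < d) x ord0 i ^+ 2).

Definition diam (d : nat) (Om : set 'rV[R]_d) : R :=
  sup [set norm2 (x - y) | x in Om & y in Om].

Definition convex_rV (d : nat) (Om : set 'rV[R]_d) : Prop :=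
  forall x y, Om x -> Om y -> forall l : R, 0 <= l <= 1 ->
    Om ((1 - l) *: x + l *: y).

Definition Sset (d : nat) (Om : set 'rV[R]_d) (t : R) (z : 'rV[R]_d)
  : set 'rV[R]_d :=
  [set delta | Om (z - t *: delta) /\ Om (z + (1 - t) *: delta)].

Definition vel (d : nat) (Om : set 'rV[R]_d) (p0 p1 : 'rV[R]_d -> R)
  (t : R) (z : 'rV[R]_d) : 'rV[R]_d :=
  \row_(i < d)
    (iint (fun delta => \1_(Sset Om t z) delta * delta ord0 i
              * p0 (z - t *: delta) * p1 (z + (1 - t) *: delta))
     / iint (fun delta => \1_(Sset Om t z) delta
              * p0 (z - t *: delta) * p1 (z + (1 - t) *: delta))).

(* |ln (a / b)| as an extended real; +oo when a / b <= 0
   (the log ratio is then undefined / infinite). *)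
Definition lnratio (a b : R) : \bar R :=
  if 0 < a / b then (`|ln (a / b)|)%:E else +oo%E.

Definition rlog (d : nat) (Om : set 'rV[R]_d) (p0 p1 q0 q1 : 'rV[R]_d -> R)
  : \bar R :=
  ereal_sup [set maxe (lnratio (q0 x) (p0 x)) (lnratio (q1 x) (p1 x))
            | x in Om].

Definition supdiff (d : nat) (Om : set 'rV[R]_d) (p0 p1 q0 q1 : 'rV[R]_d -> R)
  : \bar R :=
  ereal_sup [set (norm2 (vel Om q0 q1 tz.1 tz.2 - vel Om p0 p1 tz.1 tz.2))%:E
            | tz in [set tz : R * 'rV[R]_d |
                     0 <= tz.1 <= 1 /\ interior Om tz.2]].

Definition good_density (d : nat) (Om : set 'rV[R]_d) (p : 'rV[R]_d -> R)
  : Prop :=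
  rV_mfun p /\
  (forall x, 0 <= p x) /\
  (forall x, ~ Om x -> p x = 0) /\
  iint p = 1 /\
  {within Om, continuous p} /\
  (exists M : R, forall x, Om x -> p x <= M) /\
  (exists c : R, 0 < c /\ forall x, Om x -> c <= p x).

Definition estimator (d : nat) (Om : set 'rV[R]_d) (q : 'rV[R]_d -> R)
  : Prop := rV_mfun q /\ (forall x, ~ Om x -> q x = 0).

End Defs.

(* Outer probability (for possibly non-measurable events). *)
Definition outerP (R : realType) (dT : measure_display) (T : measurableType dT)
  (P : probability T R) (A : set T) : \bar R :=
  ereal_inf [set P B | B in [set B | measurable B /\ A `<=` B]].

Definition o_p1 (R : realType) (dT : measure_display) (T : measurableType dT)
  (P : probability T R) (X : nat -> T -> \bar R) : Prop :=
  forall eps : R, 0 < eps ->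
    (fun n => outerP P [set w | (eps%:E < X n w)%E]) @ \oo --> 0%E.

Definition O_p (R : realType) (dT : measure_display) (T : measurableType dT)
  (P : probability T R) (X a : nat -> T -> \bar R) : Prop :=
  forall eps : R, 0 < eps -> exists M : R, 0 < M /\
    exists N : nat, forall n, (N <= n)%N ->
      (outerP P [set w | (M%:E * a n w < X n w)%E] <= eps%:E)%E.

(* Main.v *)
Require Import Defs.
From HB Require Import structures.
From mathcomp Require Import all_boot all_order all_algebra.
From mathcomp Require Import all_classical all_reals all_analysis.
From mathcomp Require Import measurable_realfun.
From mathcomp Require Import ring lra.
Import Order.TTheory GRing.Theory Num.Theory.
Import numFieldNormedType.Exports.
Local Open Scope classical_set_scope.
Local Open Scope ring_scope.
Section VSpace.
Variable R : realType.

Definition V (d : nat) := 'rV[R]_d.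
HB.instance Definition _ d := Pointed.on (V d).

Let Vmeas d := @rV_measurable R d.

Let V_set0 d : Vmeas d set0.
Proof. exact: sigma_algebra0. Qed.
Let V_setC d A : Vmeas d A -> Vmeas d (~` A).
Proof. exact: sigma_algebraC. Qed.
Let V_bigcup d (F : (set (V d))^nat) : (forall i, Vmeas d (F i)) ->
  Vmeas d (\bigcup_i (F i)).
Proof. exact: sigma_algebra_bigcup. Qed.

HB.instance Definition _ d := @isMeasurable.Build default_measure_display
  (V d) (Vmeas d) (V_set0 d) (@V_setC d) (@V_bigcup d).

Lemma measurable_coord d (i : 'I_d) :
  measurable_fun [set: V d] (fun v : V d => v ord0 i).
Proof.
move=> _ B mB; rewrite setTI; apply: sub_sigma_algebra.
rewrite (bigD1 i) //=; left; exists B => //; by rewrite setTI.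
Qed.

Lemma measurable_toV d' (T : measurableType d') d (g : T -> V d) :
  (forall i, measurable_fun [set: T] (fun x => g x ord0 i)) ->
  measurable_fun [set: T] g.
Proof.
move=> hg; apply: (@measurability _ _ _ _ _ _ (\big[setU/set0]_(i < d)
   preimage_set_system setT (fun (v : V d) => v ord0 i) measurable)) => //.
pose P (S : set (set (V d))) := forall A, S A -> measurable (setT `&` g @^-1` A).
suff : P (\big[setU/set0]_(i < d)
   preimage_set_system setT (fun (v : V d) => v ord0 i) measurable).
  by move=> HP _ [A SA <-]; exact: HP.
apply: big_ind.
- by move=> A [].
- by move=> S1 S2 h1 h2 A [/h1|/h2].
- move=> i _ A [B mB <-]; rewrite setTI -comp_preimage.
  exact: (hg i).
Qed.

End VSpace.
Section Prod.
Variable R : realType.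
Local Notation V := (V R).
Local Notation LR := (measurableTypeR R).

Definition phi d (xy : LR * V d) : V d.+1 := row_mx (\row_(j < 1) xy.1) xy.2.
Definition psi d (v : V d.+1) : LR * V d :=
  (v ord0 ord0, \row_(j < d) v ord0 (lift ord0 j)).

Lemma psiK d : cancel (@phi d) (@psi d).
Proof.
case=> x y; rewrite /psi /phi /=; congr pair.
  by rewrite mxE; case: splitP => k; rewrite ?mxE //.
apply/rowP => j; rewrite mxE.
rewrite mxE; case: splitP => k /= hk.
  by have := ltn_ord k; rewrite -hk /bump.
by congr (y _ _); apply/val_inj; move: hk; rewrite /bump /=; case.
Qed.

Lemma measurable_phi d : measurable_fun [set: LR * V d] (@phi d).
Proof.
apply: measurable_toV => i; rewrite /phi.
have -> : (fun x : LR * V d => row_mx (\row_(j < 1) x.1) x.2 ord0 i) =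
  (fun x => match @fintype.split 1 d i with inl k => x.1 | inr k => x.2 ord0 k end).
  by apply: funext => x; rewrite mxE; case: fintype.split => k //; rewrite mxE.
case: fintype.split => k; first exact: measurable_fst.
apply: (@measurableT_comp _ _ _ _ _ _ (fun v : V d => v ord0 k) _ snd); [exact: measurable_coord | exact: measurable_snd].
Qed.

Lemma measurable_psi d : measurable_fun [set: V d.+1] (@psi d).
Proof.
apply: measurable_fun_pair; first exact: measurable_coord.
apply: measurable_toV => j /=.
under eq_fun do rewrite mxE.
exact: measurable_coord.
Qed.

End Prod.
Section PM.
Variable R : realType.
Local Notation V := (V R).
Local Notation LR := (measurableTypeR R).

Definition pm d (m : set (V d) -> \bar R) : set (V d.+1) -> \bar R :=
  pushforward ((@lebesgue_measure R) \x m)%E (@phi R d).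
Arguments pm {d}.

Section pm_instance.
Variable d : nat.
Variable m : {sigma_finite_measure set (V d) -> \bar R}.
Local Open Scope ereal_scope.

Let pm0 : pm m set0 = 0.
Proof. by rewrite /pm /pushforward preimage_set0 measure0. Qed.

Let pm_ge0 A : 0 <= pm m A.
Proof.
apply: measure_ge0.
exact: measurable_phi.
Qed.

Let pm_sigma_additive : semi_sigma_additive (pm m).
Proof.
move=> F mF tF mUF; rewrite /pm /pushforward preimage_bigcup.
apply: measure_semi_sigma_additive.
- by move=> n; rewrite -[X in measurable X]setTI; exact: measurable_phi.
- apply/trivIsetP => /= i j _ _ ij; rewrite -preimage_setI.
  by move/trivIsetP : tF => /(_ _ _ _ _ ij) ->//; rewrite preimage_set0.
- by rewrite -preimage_bigcup -[X in measurable X]setTI; exact: measurable_phi.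
Qed.

HB.instance Definition _ := isMeasure.Build _ _ _ (pm m)
  pm0 pm_ge0 pm_sigma_additive.

Let pm_sigma_finite : sigma_finite setT (pm m).
Proof.
have : sigma_finite setT ((@lebesgue_measure R) \x m)%E.
  have /sigma_finiteP[F [TF ndF Foo]] := sigma_finiteT (@lebesgue_measure R).
  have /sigma_finiteP[G [TG ndG Goo]] := sigma_finiteT m.
  exists (fun n => F n `*` G n).
   rewrite -setXTT TF TG predeqE => -[x y]; split.
      move=> [/= [n _ Fnx] [k _ Gky]]; exists (maxn n k) => //; split.
      - by move: x Fnx; exact/subsetPset/ndF/leq_maxl.
      - by move: y Gky; exact/subsetPset/ndG/leq_maxr.
    by move=> [n _ []/= ? ?]; split; exists n.
  move=> k; have [? ?] := Foo k; have [? ?] := Goo k.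
  split; first exact: measurableX.
  by rewrite product_measure1E// lte_mul_pinfty// ge0_fin_numE.
case=> F UF hF.
exists (fun n => (@psi R d) @^-1` (F n)).
  by rewrite -preimage_bigcup -UF preimage_setT.
move=> n; split.
  rewrite -[X in measurable X]setTI; apply: measurable_psi => //.
  by case: (hF n).
rewrite /pm /pushforward -comp_preimage.
have -> : (@psi R d \o @phi R d) = id by apply: funext => x /=; rewrite psiK.
by rewrite preimage_id; case: (hF n).
Qed.

HB.instance Definition _ := Measure_isSigmaFinite.Build _ _ _ (pm m)
  pm_sigma_finite.

End pm_instance.

Fixpoint mu d : {sigma_finite_measure set (V d) -> \bar R} :=
  match d with
  | 0 => [the {sigma_finite_measure set (V 0) -> \bar R} of \d_(0 : V 0)]
  | d'.+1 => [the {sigma_finite_measure set (V d'.+1) -> \bar R} of pm (mu d')]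
  end.

End PM.
Section Box.
Variable R : realType.
Local Notation V := (V R).
Local Notation LR := (measurableTypeR R).
Local Notation phi := (@phi R).
Local Notation psi := (@psi R).
Local Notation mu := (@mu R).

Lemma row_split_eq d (v : 'rV[R]_d.+1) :
  (row_mx (\row_(j < 1) v ord0 ord0) (\row_(j < d) v ord0 (lift ord0 j)) : 'rV_d.+1) = v.
Proof.
apply/rowP => i; rewrite mxE.
case: splitP => k hk; rewrite !mxE.
  by congr (v _ _); apply/val_inj; rewrite /= hk; case: k {hk} => -[].
by congr (v _ _); apply/val_inj; rewrite /= hk.
Qed.

Lemma phiK d : cancel (@psi d) (@phi d).
Proof. move=> v; exact: row_split_eq. Qed.

Definition boxV d (K : R) := [set v : V d | forall i, `|v ord0 i| <= K].

Lemma phi_box d K : phi d @^-1` boxV d.+1 K = `[-K, K]%classic `*` boxV d K.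
Proof.
apply/seteqP; split.
- move=> [x y] h; split.
    have := h ord0; rewrite /phi mxE; case: splitP => k; rewrite ?mxE //=.
    by move=> _ hx; rewrite in_itv /= -ler_norml.
  move=> j; have := h (lift ord0 j); rewrite /phi mxE; case: splitP => k hk.
    by move: hk => /= hk; have := ltn_ord k; rewrite -hk /bump.
  suff -> : j = k by [].
  by apply/val_inj; move: hk => /=; rewrite /bump /=; case.
- move=> [x y] [hx hy] i; rewrite /phi mxE; case: splitP => k _; rewrite ?mxE //.
  by move: hx; rewrite /= in_itv /= -ler_norml.
Qed.

Lemma measurable_box d K : measurable (boxV d K).
Proof.
elim: d => [|d IH].
  have -> : boxV 0 K = setT by apply/seteqP; split => // v _ [].
  exact: measurableT.
have -> : boxV d.+1 K = psi d @^-1` (phi d @^-1` boxV d.+1 K).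
  by apply/seteqP; split => v; rewrite /preimage /= phiK.
rewrite phi_box -[X in measurable X]setTI; apply: measurable_psi => //.
apply: measurableX => //; exact: measurable_itv.
Qed.

Lemma mu_box d K : (mu d (boxV d K) < +oo)%E.
Proof.
elim: d => [|d IH].
  by rewrite /= diracE; case: (_ \in _) => //=; rewrite ltry.
rewrite /= /pm /pushforward phi_box product_measure1E//; last first.
  exact: measurable_box.
rewrite lte_mul_pinfty//.
  have := @lebesgue_measure_itv R `[-K, K]; rewrite /= => ->.
  by case: ifP => //= _; rewrite -EFinD.
Qed.

End Box.
Section Bridge.
Variable R : realType.
Local Notation V := (V R).
Local Notation LR := (measurableTypeR R).
Local Notation phi := (@phi R).
Local Notation psi := (@psi R).
Local Notation mu := (@mu R).
Local Notation boxV := (@boxV R).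

Lemma bsupp_integrable dT (T : measurableType dT) (m : {measure set T -> \bar R})
  (A : set T) (g : T -> R) (M : R) :
  measurable A -> (m A < +oo)%E -> measurable_fun setT g ->
  (forall x, `|g x| <= M) -> (forall x, ~ A x -> g x = 0) ->
  m.-integrable setT (EFin \o g).
Proof.
move=> mA mAoo mg gM g0.
have : m.-integrable A (EFin \o g).
  apply: measurable_bounded_integrable => //; first exact: measurable_funS mg.
  exists M; split => [|M0 hM0 x _ /=]; first exact: num_real.
  exact: le_trans (gM x) (ltW hM0).
move/(integrable_mkcond _ mA); apply: eq_integrable => // x _.
rewrite /restrict; case: ifPn => // /negP; rewrite inE => /g0 /= ->//.
Qed.

Lemma measurable_section d (x : LR) :
  measurable_fun [set: V d] (fun y => phi d (x, y)).
Proof.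
apply: (@measurableT_comp _ _ _ _ _ _ (phi d) _ (fun y => (x, y))).
  exact: measurable_phi.
apply: measurable_fun_pair => //; exact: measurable_cst.
Qed.

Lemma iintS d (f : V d.+1 -> R) : iint f =
  Rintegral (@lebesgue_measure R) setT (fun x => iint (fun y => f (phi d (x, y)))).
Proof. by []. Qed.

Lemma iint_mu d (f : V d -> R) (M K : R) : measurable_fun setT f ->
  (forall v, `|f v| <= M) -> (forall v, ~ boxV d K v -> f v = 0) ->
  iint f = Rintegral (mu d) setT f.
Proof.
elim: d f => [|d IH] f mf fM f0.
  rewrite /Rintegral /= integral_dirac//; last exact/measurable_EFinP.
  by rewrite diracT mul1e.
rewrite iintS.
have secI x : (mu d).-integrable setT (EFin \o (fun y => f (phi d (x, y)))).
  apply: (@bsupp_integrable _ _ _ (boxV d K) _ M) => //.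
  - exact: measurable_box.
  - exact: mu_box.
  - exact: measurableT_comp mf (measurable_section d x).
  - move=> y hy; apply: f0 => hb; apply: hy.
    by have : (phi d @^-1` boxV d.+1 K) (x, y) by []; rewrite phi_box => -[].
have sec x : iint (fun y => f (phi d (x, y))) =
    Rintegral (mu d) setT (fun y => f (phi d (x, y))).
  apply: IH => [|y|y hy].
  - exact: measurableT_comp mf (measurable_section d x).
  - exact: fM.
  - apply: f0 => hb; apply: hy.
    by have : (phi d @^-1` boxV d.+1 K) (x, y) by []; rewrite phi_box => -[].
under eq_fun do rewrite sec.
have prodI : ((@lebesgue_measure R) \x mu d)%E.-integrable setT
    (EFin \o (f \o phi d)).
  apply: (@bsupp_integrable _ _ ((@lebesgue_measure R) \x mu d)%E (`[-K, K]%classic `*` boxV d K) (f \o phi d) M) => //.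
  - apply: measurableX; [exact: measurable_itv | exact: measurable_box].
  - by rewrite -phi_box; have h := @mu_box R d.+1 K; exact h.
  - apply: (@measurableT_comp _ _ _ _ _ _ f _ (phi d)); [exact: mf | exact: measurable_phi].
  - by move=> xy; exact: fM.
  - move=> xy hxy; apply: f0 => hb; apply: hxy.
    by rewrite -phi_box.
rewrite /Rintegral.
have -> : (\int[mu d.+1]_x (f x)%:E)%E =
  (\int[pushforward ((@lebesgue_measure R) \x mu d)%E (phi d)]_x (f x)%:E)%E
  by [].
rewrite integral_pushforward //; first last.
- exact/measurable_EFinP.
- exact: measurable_phi.
rewrite preimage_setT -integral12_prod_meas1 //.
congr fine; apply: eq_integral => x _.
rewrite fineK //; exact: integrable_fin_num (secI x).
Qed.

End Bridge.
Section Real.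
Variable R : realType.

Lemma norm2_ge0 d (x : 'rV[R]_d) : 0 <= norm2 x.
Proof. exact: sqrtr_ge0. Qed.

Lemma norm2_sqr d (x : 'rV[R]_d) : norm2 x ^+ 2 = \sum_(i < d) x ord0 i ^+ 2.
Proof. by rewrite /norm2 sqr_sqrtr // sumr_ge0 // => i _; exact: sqr_ge0. Qed.

Lemma norm2_0 d : norm2 (0 : 'rV[R]_d) = 0.
Proof.
by rewrite /norm2 big1 ?sqrtr0 // => i _; rewrite mxE expr0n.
Qed.

Lemma coord_le_norm2 d (x : 'rV[R]_d) i : `|x ord0 i| <= norm2 x.
Proof.
rewrite -(ler_pXn2r (n := 2)) ?nnegrE ?norm2_ge0 // norm2_sqr real_normK ?num_real //.
by rewrite (bigD1 i) //= lerDl sumr_ge0 // => j _; exact: sqr_ge0.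
Qed.

Lemma CS_sq d (a b : 'rV[R]_d) :
  (\sum_(i < d) a ord0 i * b ord0 i) ^+ 2 <=
  (\sum_(i < d) a ord0 i ^+ 2) * (\sum_(i < d) b ord0 i ^+ 2).
Proof.
set s := \sum_(i < d) _ * _; set sa := \sum_(i < d) _ ^+ 2;
set sb := \sum_(i < d) b ord0 i ^+ 2.
have sb0 : 0 <= sb by rewrite sumr_ge0 // => i _; exact: sqr_ge0.
have [sbz|sbp] := eqVneq sb 0.
  have bz i : b ord0 i = 0.
    move/eqP: sbz; rewrite psumr_eq0 => [/allP/(_ i)|j _]; last exact: sqr_ge0.
    by rewrite mem_index_enum => /(_ isT) /implyP /(_ isT); rewrite sqrf_eq0 => /eqP.
  by rewrite /s big1 ?expr0n ?sbz ?mulr0 // => i _; rewrite bz mulr0.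
have sbpos : 0 < sb by rewrite lt_def sbp sb0.
have key : 0 <= \sum_(i < d) (sb * a ord0 i - s * b ord0 i) ^+ 2.
  by rewrite sumr_ge0 // => i _; exact: sqr_ge0.
have E : \sum_(i < d) (sb * a ord0 i - s * b ord0 i) ^+ 2 =
    sb * (sb * sa - s ^+ 2).
  have -> : \sum_(i < d) (sb * a ord0 i - s * b ord0 i) ^+ 2 =
     \sum_(i < d) (sb ^+ 2 * a ord0 i ^+ 2 - (2 * sb * s) * (a ord0 i * b ord0 i)
        + s ^+ 2 * b ord0 i ^+ 2).
    by apply: eq_bigr => i _; ring.
  rewrite big_split /= big_split /= sumrN -!mulr_sumr -/s -/sa -/sb.
  ring.
rewrite E in key.
rewrite -subr_ge0 mulrC; move: key; rewrite pmulr_rge0 //.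
Qed.

Lemma CS d (a b : 'rV[R]_d) :
  `|\sum_(i < d) a ord0 i * b ord0 i| <= norm2 a * norm2 b.
Proof.
rewrite -(ler_pXn2r (n := 2)) ?nnegrE ?mulr_ge0 ?norm2_ge0 //.
by rewrite exprMn !norm2_sqr real_normK ?num_real // CS_sq.
Qed.

End Real.
Section Real2.
Variable R : realType.

Lemma ratio_bound (a a' T T' rho : R) : 0 <= a -> 0 <= a' -> 0 < T -> 0 < T' ->
  1 <= rho -> a <= rho * a' -> a' <= rho * a -> T <= rho * T' -> T' <= rho * T ->
  `|a' / T' - a / T| <= (rho ^+ 2 - 1) * (a / T).
Proof.
move=> a0 a'0 T0 T'0 r1 h1 h2 h3 h4.
have r0 : 0 < rho by exact: lt_le_trans ltr01 r1.
have E1 : a' / T' - a / T = (a' * T - a * T') / (T * T').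
  by field; rewrite ?gt_eqF.
have E2 : (rho ^+ 2 - 1) * (a / T) = ((rho ^+ 2 - 1) * a * T') / (T * T').
  by field; rewrite ?gt_eqF.
have TT0 : 0 < T * T' by exact: mulr_gt0.
rewrite E1 E2 normrM (gtr0_norm (x := (T * T')^-1)) ?invr_gt0 //.
rewrite ler_pM2r ?invr_gt0 //.
have P1 : a' * T <= rho ^+ 2 * (a * T').
  have : a' * T <= (rho * a) * (rho * T').
    by apply: ler_pM => //; exact: ltW.
  by move=> h; apply: le_trans h _; rewrite le_eqVlt; apply/orP; left; apply/eqP; ring.
have P2 : a * T' <= rho ^+ 2 * (a' * T).
  have : a * T' <= (rho * a') * (rho * T).
    by apply: ler_pM => //; exact: ltW.
  by move=> h; apply: le_trans h _; rewrite le_eqVlt; apply/orP; left; apply/eqP; ring.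
have aT0 : 0 <= a * T' by rewrite mulr_ge0 // ltW.
rewrite ler_norml; apply/andP; split.
-
  have r2 : 1 <= rho ^+ 2 by rewrite expr_ge1 // ltW.
  have : (2 - rho ^+ 2) * (a * T') <= a' * T.
    have k : rho ^+ 2 * ((2 - rho ^+ 2) * (a * T')) <= rho ^+ 2 * (a' * T).
      apply: le_trans P2.
      have : 0 <= (rho ^+ 2 - 1) ^+ 2 * (a * T') by rewrite mulr_ge0 // sqr_ge0.
      by rewrite -subr_ge0 => h; rewrite -subr_ge0; apply: le_trans h _; rewrite le_eqVlt; apply/orP; left; apply/eqP; ring.
    by rewrite ler_pM2l ?exprn_gt0 in k.
  by move=> h; rewrite -subr_ge0; rewrite -subr_ge0 in h; apply: le_trans h _; rewrite le_eqVlt; apply/orP; left; apply/eqP; ring.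
- by rewrite -subr_ge0; rewrite -subr_ge0 in P1; apply: le_trans P1 _; rewrite le_eqVlt; apply/orP; left; apply/eqP; ring.
Qed.

End Real2.
Section Core.
Variable R : realType.
Variable d : nat.
Local Notation V := (V R d).
Local Notation mu := (@mu R d).
Local Notation I f := (Rintegral mu setT f).

Lemma Rintegral_sum (J : Type) (s : seq J) (F : J -> V -> R) :
  (forall j, mu.-integrable setT (EFin \o F j)) ->
  I (fun x => \sum_(j <- s) F j x) = \sum_(j <- s) I (F j) /\
  mu.-integrable setT (EFin \o (fun x => \sum_(j <- s) F j x)).
Proof.
move=> hF; elim: s => [|j s [IH1 IH2]].
  under eq_fun do rewrite big_nil.
  rewrite big_nil Rintegral_cst // mul0r; split => //.
  exact: (integrable0 mu setT).
under eq_fun do rewrite big_cons.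
rewrite big_cons RintegralD // -?IH1; split => //.
exact: (integrableD measurableT (hF j) IH2).
Qed.

Variables (W W' : V -> R) (D rho M : R).
Hypotheses (mW : measurable_fun setT W) (mW' : measurable_fun setT W')
  (W0 : forall x, 0 <= W x) (WM : forall x, W x <= M)
  (Wsupp : forall x, W x != 0 -> norm2 x <= D)
  (rho1 : 1 <= rho) (WW' : forall x, W x <= rho * W' x)
  (W'W : forall x, W' x <= rho * W x) (D0 : 0 <= D).

Let rho0 : 0 < rho. Proof. exact: lt_le_trans ltr01 rho1. Qed.

Let W'0 x : 0 <= W' x.
Proof.
have := WW' x; have := W0 x => h1 h2.
by rewrite -(pmulr_rge0 _ rho0); exact: le_trans h2.
Qed.

Let W'z x : W x = 0 -> W' x = 0.
Proof. by move=> h; apply/eqP; rewrite eq_le W'0 andbT; have := W'W x; rewrite h mulr0. Qed.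

Let intW : mu.-integrable setT (EFin \o W).
Proof.
apply: (@bsupp_integrable R _ _ mu (@boxV R d D) W M) => //.
- exact: measurable_box.
- exact: mu_box.
- by move=> x; rewrite ger0_norm.
- move=> x hx; apply/eqP/negPn/negP => /Wsupp hn; apply: hx => i.
  exact: le_trans (@coord_le_norm2 R d x i) hn.
Qed.

Definition good (g : V -> R) :=
  measurable_fun setT g /\ exists C, forall x, `|g x| <= C * W x.

Lemma good_int g : good g -> mu.-integrable setT (EFin \o g).
Proof.
move=> [mg [C hC]].
apply: (@le_integrable _ _ _ mu setT measurableT (EFin \o g) (EFin \o (fun x => C * W x))).
- exact/measurable_EFinP.
- move=> x _ /=; rewrite lee_fin; apply: le_trans (hC x) _; exact: ler_norm.
- exact: (integrableZl measurableT C intW).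
Qed.

Lemma goodW : good W.
Proof. by split => //; exists 1 => x; rewrite mul1r ger0_norm. Qed.

Lemma goodW' : good W'.
Proof. by split => //; exists rho => x; rewrite ger0_norm. Qed.

Lemma goodD f g : good f -> good g -> good (fun x => f x + g x).
Proof.
move=> [mf [C1 h1]] [mg [C2 h2]]; split; first exact: measurable_funD.
exists (C1 + C2) => x; rewrite mulrDl; apply: le_trans (ler_normD _ _) _.
exact: lerD.
Qed.

Lemma goodZ c f : good f -> good (fun x => c * f x).
Proof.
move=> [mf [C h]]; split; first exact: measurable_funM.
exists (`|c| * C) => x; rewrite normrM -mulrA; apply: ler_wpM2l => //.
Qed.

Lemma goodN f : good f -> good (fun x => - f x).
Proof.
move=> gf; have := @goodZ (-1) f gf.
suff -> : (fun x => -1 * f x) = (fun x => - f x) by [].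
by apply: funext => x; rewrite mulN1r.
Qed.

Lemma goodX i f : good f -> good (fun x => x ord0 i * f x).
Proof.
move=> [mf [C h]]; split.
  by apply: measurable_funM => //; exact: measurable_coord.
exists (D * C) => x; have [Wz|Wnz] := eqVneq (W x) 0.
  have : `|f x| <= 0 by rewrite -(mulr0 C) -Wz.
  by rewrite normr_le0 => /eqP ->; rewrite mulr0 normr0 Wz !mulr0.
rewrite normrM -mulrA; apply: ler_pM => //.
exact: le_trans (@coord_le_norm2 R d x i) (Wsupp x Wnz).
Qed.


Lemma core :
  norm2 ((\row_(i < d) (I (fun x => x ord0 i * W' x) / I W'))
       - (\row_(i < d) (I (fun x => x ord0 i * W x) / I W)) : 'rV[R]_d)
  <= D * (rho ^+ 2 - 1).
Proof.
set Wt := I W; set Wt' := I W'.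
have iW := good_int _ goodW; have iW' := good_int _ goodW'.
have Wt0 : 0 <= Wt by apply: Rintegral_ge0 => x _.
have Wt'0 : 0 <= Wt' by apply: Rintegral_ge0 => x _.
have Wt'le : Wt' <= rho * Wt.
  rewrite /Wt /Wt' -RintegralZl //; apply: le_Rintegral => //.
  exact: good_int (goodZ rho _ goodW).
have Wtle : Wt <= rho * Wt'.
  rewrite /Wt /Wt' -RintegralZl //; apply: le_Rintegral => //.
  exact: good_int (goodZ rho _ goodW').
have r2 : 1 <= rho ^+ 2 by rewrite expr_ge1 // (le_trans ler01 rho1).
have C0 : 0 <= D * (rho ^+ 2 - 1) by rewrite mulr_ge0 // subr_ge0.
have [Wtz|Wtnz] := eqVneq Wt 0.
  have Wt'z : Wt' = 0.
    by apply/eqP; rewrite eq_le Wt'0 andbT; move: Wt'le; rewrite Wtz mulr0.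
  suff -> : ((\row_(i < d) (I (fun x => x ord0 i * W' x) / Wt'))
       - (\row_(i < d) (I (fun x => x ord0 i * W x) / Wt)) : 'rV[R]_d) = 0.
    by rewrite norm2_0.
  by apply/rowP => i; rewrite !mxE Wtz Wt'z !invr0 !mulr0 subrr.
have Wtp : 0 < Wt by rewrite lt_def Wtnz Wt0.
have Wt'p : 0 < Wt'.
  rewrite lt_def Wt'0 andbT; apply/negP => /eqP z; move: Wtle.
  by rewrite z mulr0 => h; move: Wtnz; rewrite eq_le h Wt0.
set w := (_ - _ : 'rV[R]_d).
set C := D * (rho ^+ 2 - 1).
set A := fun i => I (fun x => x ord0 i * W x).
set B := fun i => I (fun x => x ord0 i * W' x).
have wi i : w ord0 i = B i / Wt' - A i / Wt by rewrite !mxE.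
pose G i (x : V) := (w ord0 i / Wt') * (x ord0 i * W' x) - (w ord0 i / Wt) * (x ord0 i * W x).
have gG i : good (G i).
  apply: goodD; first exact/goodZ/goodX/goodW'.
  exact/goodN/goodZ/goodX/goodW.
have IG i : I (G i) = w ord0 i ^+ 2.
  rewrite /G RintegralB //; last 2 first.
  - exact/good_int/goodZ/goodX/goodW'.
  - exact/good_int/goodZ/goodX/goodW.
  rewrite !RintegralZl //; last 2 first.
  - exact/good_int/goodX/goodW.
  - exact/good_int/goodX/goodW'.
  rewrite -/(A i) -/(B i) [in RHS]expr2 {3}wi; ring.
have key : norm2 w ^+ 2 <= norm2 w * C.
  rewrite norm2_sqr.
  have -> : \sum_(i < d) w ord0 i ^+ 2 = \sum_(i <- index_enum 'I_d) I (G i).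
    by apply: eq_bigr => i _; rewrite IG.
  have [<- iS] := @Rintegral_sum _ (index_enum 'I_d) G (fun i => good_int _ (gG i)).
  have -> : norm2 w * C = I (fun x => (norm2 w * C / Wt) * W x).
    by rewrite RintegralZl // -/Wt mulrVK // unitfE.
  apply: le_Rintegral => //; first exact/good_int/goodZ/goodW.
  move=> x _.
  set hx := W' x / Wt' - W x / Wt.
  have -> : \sum_(i <- index_enum 'I_d) G i x =
      (\sum_(i < d) w ord0 i * x ord0 i) * hx.
    rewrite mulr_suml; apply: eq_bigr => i _; rewrite /G /hx; ring.
  have [Wz|Wnz] := eqVneq (W x) 0.
    rewrite /hx Wz W'z // !mul0r subrr mulr0 mulr0; exact: le_refl.
  apply: le_trans (ler_norm _) _; rewrite normrM.
  have hb : `|hx| <= (rho ^+ 2 - 1) * (W x / Wt).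
    apply: ratio_bound => //; exact: W0.
  have nx := Wsupp x Wnz.
  apply: le_trans (ler_wpM2r (normr_ge0 _) (@CS R d w x)) _.
  apply: le_trans (ler_wpM2l (mulr_ge0 (@norm2_ge0 R d w) (@norm2_ge0 R d x)) hb) _.
  have : norm2 w * norm2 x <= norm2 w * D by apply: ler_wpM2l => //; exact: norm2_ge0.
  move=> h; apply: le_trans (ler_wpM2r _ h) _.
    by rewrite mulr_ge0 ?subr_ge0 // divr_ge0.
  by rewrite /C le_eqVlt; apply/orP; left; apply/eqP; field; rewrite gt_eqF.
have [nz|nnz] := eqVneq (norm2 w) 0; first by rewrite nz.
have np : 0 < norm2 w by rewrite lt_def nnz norm2_ge0.
by move: key; rewrite expr2 ler_pM2l.
Qed.

End Core.
Section Main.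
Variable R : realType.
Variable d : nat.
Variable Om : set 'rV[R]_d.
Hypothesis hc : compact Om.
Hypothesis hne : Om !=set0.

Lemma coord_le_mxnorm (x : 'rV[R]_d) i : `|x ord0 i| <= `|x|.
Proof.
have -> : `|x| = mx_norm x by [].
rewrite mx_normrE.
exact: (le_bigmax _ (fun ij : 'I_1 * 'I_d => `|x ij.1 ij.2|) (ord0, i)).
Qed.

Lemma Om_bounded : exists K0, 0 <= K0 /\ forall x, Om x -> forall i, `|x ord0 i| <= K0.
Proof.
have [M [_ hM]] := compact_bounded hc.
exists (`|M| + 1); split; first by rewrite addr_ge0.
move=> x Ox i; apply: le_trans (coord_le_mxnorm x i) _.
have := hM (`|M| + 1); apply => //.
by apply: le_lt_trans (ler_norm M) _; rewrite ltrDl.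
Qed.

Lemma diam_ub a b : Om a -> Om b -> norm2 (a - b) <= diam Om.
Proof.
move=> Oa Ob; have [K0 [K00 hK]] := Om_bounded.
apply: sup_upper_bound; last by exists a => //; exists b.
split; first by exists (norm2 (a - b)); exists a => //; exists b.
exists (Num.sqrt (\sum_(i < d) (2 * K0) ^+ 2)) => _ [x Ox [y Oy <-]].
apply: ler_wsqrtr; apply: ler_sum => i _; rewrite mxE.
rewrite -real_normK ?num_real // ler_pXn2r ?nnegrE ?mulr_ge0 //.
rewrite mxE; apply: le_trans (ler_normD _ _) _; rewrite normrN.
have -> : 2 * K0 = K0 + K0 by rewrite mulr2n mulrDl mul1r.
by apply: lerD; apply: hK.
Qed.

Lemma diam_ge0 : 0 <= diam Om.
Proof.
case: hne => a Oa; exact: le_trans (@norm2_ge0 R d (a - a)) (diam_ub _ _ Oa Oa).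
Qed.

Lemma Sset_norm t z delta : Sset Om t z delta -> norm2 delta <= diam Om.
Proof.
move=> [h1 h2]; have := diam_ub _ _ h2 h1.
suff -> : z + (1 - t) *: delta - (z - t *: delta) = delta by [].
by apply/rowP => i; rewrite !mxE; ring.
Qed.

Definition Wf (q0 q1 : 'rV[R]_d -> R) (t : R) (z : 'rV[R]_d) : V R d -> R :=
  fun delta => q0 (z - t *: delta) * q1 (z + (1 - t) *: delta).

Lemma Wf_supp q0 q1 t z : (forall x, ~ Om x -> q0 x = 0) ->
  (forall x, ~ Om x -> q1 x = 0) ->
  forall delta, Wf q0 q1 t z delta != 0 -> Sset Om t z delta.
Proof.
move=> h0 h1 delta; rewrite /Wf mulf_eq0 negb_or => /andP[n0 n1].
split; apply/not_notP => hn; [move/eqP: n0|move/eqP: n1]; apply; [exact: h0|exact: h1].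
Qed.

Lemma iint0 n : iint (fun _ : 'rV[R]_n => 0) = 0.
Proof.
elim: n => [//|n IH]; rewrite iintS.
under eq_fun do rewrite IH.
by rewrite Rintegral_cst // mul0r.
Qed.

Lemma vel_zero q0 q1 t z : diam Om = 0 -> vel Om q0 q1 t z = 0.
Proof.
move=> D0; apply/rowP => i; rewrite !mxE.
suff -> : (fun delta : 'rV_d => \1_(Sset Om t z) delta * delta ord0 i
    * q0 (z - t *: delta) * q1 (z + (1 - t) *: delta)) = (fun _ => 0).
  by rewrite iint0 mul0r.
apply: funext => delta; rewrite indicE.
case: (boolP (delta \in Sset Om t z)) => [/set_mem hS|]; last by rewrite !mul0r.
have : `|delta ord0 i| <= 0.
  by rewrite -D0; apply: le_trans (@coord_le_norm2 R d delta i) (Sset_norm _ _ _ hS).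
by rewrite normr_le0 => /eqP ->; rewrite mulr0 !mul0r.
Qed.

Lemma measurable_affine (z : 'rV[R]_d) (a : R) :
  measurable_fun [set: V R d] (fun delta : V R d => (z + a *: delta : V R d)).
Proof.
apply: measurable_toV => i.
under eq_fun do rewrite !mxE.
apply: measurable_funD; first exact: measurable_cst.
apply: measurable_funM; first exact: measurable_cst.
exact: measurable_coord.
Qed.

Lemma mfun_meas (q : 'rV[R]_d -> R) : rV_mfun q ->
  measurable_fun [set: V R d] (q : V R d -> R).
Proof. by move=> hq _ B mB; rewrite setTI; exact: hq. Qed.

Lemma measurable_Wf q0 q1 t z : rV_mfun q0 -> rV_mfun q1 ->
  measurable_fun setT (Wf q0 q1 t z).
Proof.
move=> h0 h1; apply: measurable_funM.
- have -> : (fun delta : V R d => q0 (z - t *: delta)) =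
      (q0 : V R d -> R) \o (fun delta : V R d => (z + (- t) *: delta : V R d)).
    by apply: funext => x /=; rewrite scaleNr.
  apply: (@measurableT_comp _ _ _ _ _ _ (q0 : V R d -> R)); first exact: mfun_meas.
  exact: measurable_affine.
- apply: (@measurableT_comp _ _ _ _ _ _ (q1 : V R d -> R) _ (fun delta : V R d => (z + (1 - t) *: delta : V R d))); first exact: mfun_meas.
  exact: measurable_affine.
Qed.


Lemma vel_eq q0 q1 t z (Mq : R) : (forall x, ~ Om x -> q0 x = 0) ->
  (forall x, ~ Om x -> q1 x = 0) -> rV_mfun q0 -> rV_mfun q1 ->
  (forall delta, `|Wf q0 q1 t z delta| <= Mq) ->
  vel Om q0 q1 t z = \row_(i < d)
    (Rintegral (mu R d) setT (fun x => x ord0 i * Wf q0 q1 t z x)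
     / Rintegral (mu R d) setT (Wf q0 q1 t z)).
Proof.
move=> h0 h1 m0 m1 hM.
set W := Wf q0 q1 t z.
have supp delta : W delta != 0 -> norm2 delta <= diam Om.
  by move=> hn; apply: Sset_norm; exact: Wf_supp hn.
have box0 delta : ~ boxV R d (diam Om) delta -> W delta = 0.
  move=> hb; apply/eqP/negPn/negP => hn; apply: hb => i.
  exact: le_trans (@coord_le_norm2 R d delta i) (supp _ hn).
have mW : measurable_fun setT W by exact: measurable_Wf.
have S0 delta : delta \notin Sset Om t z -> W delta = 0.
  move=> hn; apply/eqP/negPn/negP => hW; move/negP: hn; apply.
  by apply/mem_set; exact: Wf_supp hW.
apply/rowP => i; rewrite !mxE.
have -> : (fun delta : 'rV_d => \1_(Sset Om t z) delta * delta ord0 i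
    * q0 (z - t *: delta) * q1 (z + (1 - t) *: delta)) = (fun x => x ord0 i * W x).
  apply: funext => delta; rewrite indicE; case: (boolP (delta \in _)) => h.
    by rewrite /W /Wf (_ : true%:R = 1 :> R) //; ring.
  by have := S0 _ h; rewrite /W /Wf => ->; rewrite !mul0r mulr0.
have -> : (fun delta : 'rV_d => \1_(Sset Om t z) delta
    * q0 (z - t *: delta) * q1 (z + (1 - t) *: delta)) = W.
  apply: funext => delta; rewrite indicE; case: (boolP (delta \in _)) => h.
    by rewrite /W /Wf (_ : true%:R = 1 :> R) //; ring.
  by have := S0 _ h; rewrite /W /Wf => ->; rewrite !mul0r.
congr (_ / _).
- apply: (@iint_mu R d _ (diam Om * Mq) (diam Om)).
  + by apply: measurable_funM => //; exact: measurable_coord.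
  + move=> v; have [Wz|Wnz] := eqVneq (W v) 0.
      rewrite Wz mulr0 normr0; apply: mulr_ge0; first exact: diam_ge0.
      exact: le_trans (normr_ge0 _) (hM v).
    rewrite normrM; apply: ler_pM => //.
    exact: le_trans (@coord_le_norm2 R d v i) (supp _ Wnz).
  + by move=> v /box0 ->; rewrite mulr0.
- apply: (@iint_mu R d _ Mq (diam Om)) => //.
Qed.

Lemma lnratio_bound (a b r' : R) : 0 < b -> (lnratio a b <= r'%:E)%E ->
  a <= expR r' * b /\ b <= expR r' * a.
Proof.
move=> b0; rewrite /lnratio; case: ifPn => hab //; rewrite lee_fin => hr.
have hl : ln (a / b) <= r' by apply: le_trans (ler_norm _) hr.
have hl' : - ln (a / b) <= r' by apply: le_trans _ hr; rewrite -normrN; exact: ler_norm.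
have e1 : a / b <= expR r'.
  by rewrite -[X in X <= _]lnK ?posrE // ler_expR.
have e2 : (expR r')^-1 <= a / b.
  rewrite -expRN -[X in _ <= X]lnK ?posrE // ler_expR.
  by rewrite lerNl.
split.
  by rewrite -ler_pdivrMr.
have ep := expR_gt0 r'.
move: e2; rewrite ler_pdivlMr // => h.
have : (expR r')^-1 * b * expR r' <= a * expR r' by rewrite ler_pM2r.
by rewrite mulrAC mulVf ?gt_eqF // mul1r mulrC.
Qed.


Lemma part1 p0 p1 q0 q1 : good_density Om p0 -> good_density Om p1 ->
  estimator Om q0 -> estimator Om q1 ->
  (supdiff Om p0 p1 q0 q1
     <= (2 * diam Om)%:E * (expeR (4%:E * rlog Om p0 p1 q0 q1) - 1%E))%E.
Proof.
move=> [mp0 [p00 [p0o [_ [_ [[M0 hM0] [c0 [c0p hc0]]]]]]]].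
move=> [mp1 [p10 [p1o [_ [_ [[M1 hM1] [c1 [c1p hc1]]]]]]]].
move=> [mq0 q0o] [mq1 q1o].
have [a Oa] := hne.
have D0 : 0 <= diam Om := diam_ge0.
have M00 : 0 <= M0 := le_trans (p00 a) (hM0 a Oa).
have M10 : 0 <= M1 := le_trans (p10 a) (hM1 a Oa).
have p0M x : p0 x <= M0.
  by case: (pselect (Om x)) => [/hM0 //| /p0o ->].
have p1M x : p1 x <= M1.
  by case: (pselect (Om x)) => [/hM1 //| /p1o ->].
have lr x : Om x -> (lnratio (q0 x) (p0 x) <= rlog Om p0 p1 q0 q1)%E /\
    (lnratio (q1 x) (p1 x) <= rlog Om p0 p1 q0 q1)%E.
  move=> Ox; have : (maxe (lnratio (q0 x) (p0 x)) (lnratio (q1 x) (p1 x))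
      <= rlog Om p0 p1 q0 q1)%E by apply: ereal_sup_ubound; exists x.
  by rewrite ge_max => /andP[].
have lnr0 (x y : R) : (0 <= lnratio x y)%E.
  by rewrite /lnratio; case: ifP => // _; rewrite lee_fin normr_ge0.
have r0 : (0 <= rlog Om p0 p1 q0 q1)%E := le_trans (lnr0 _ _) (lr a Oa).1.
apply: ge_ereal_sup => _ [[t z] /= [ht hz] <-].
have [Dz|Dnz] := eqVneq (diam Om) 0.
  rewrite !vel_zero // subrr norm2_0 Dz mulr0 mul0e; exact: le_refl.
have Dp : 0 < diam Om by rewrite lt_def Dnz D0.
move: r0 lr; case: (rlog Om p0 p1 q0 q1) => [r'| |] // r0 lr; last first.
  rewrite gt0_muley // gt0_muley ?lte_fin ?mulr_gt0 //; exact: leey.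
rewrite lee_fin in r0.
set e := expR r'.
have e1 : 1 <= e by apply: le_trans (expR_ge1Dx r'); rewrite lerDl.
have e0 : 0 < e := expR_gt0 r'.
have hq0 x : q0 x <= e * p0 x /\ p0 x <= e * q0 x.
  case: (pselect (Om x)) => Ox.
    exact: lnratio_bound (lt_le_trans c0p (hc0 x Ox)) (lr x Ox).1.
  by rewrite q0o // p0o // mulr0.
have hq1 x : q1 x <= e * p1 x /\ p1 x <= e * q1 x.
  case: (pselect (Om x)) => Ox.
    exact: lnratio_bound (lt_le_trans c1p (hc1 x Ox)) (lr x Ox).2.
  by rewrite q1o // p1o // mulr0.
have q00 x : 0 <= q0 x.
  by have := le_trans (p00 x) (hq0 x).2; rewrite pmulr_rge0.
have q10 x : 0 <= q1 x.
  by have := le_trans (p10 x) (hq1 x).2; rewrite pmulr_rge0.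
set W := Wf p0 p1 t z; set W' := Wf q0 q1 t z.
have mW : measurable_fun setT W by exact: measurable_Wf.
have mW' : measurable_fun setT W' by exact: measurable_Wf.
have W0 x : 0 <= W x by rewrite mulr_ge0.
have W'0 x : 0 <= W' x by rewrite mulr_ge0.
have WM x : W x <= M0 * M1 by apply: ler_pM.
have Wsupp x : W x != 0 -> norm2 x <= diam Om.
  by move=> hn; apply: Sset_norm; exact: Wf_supp hn.
have rho1 : 1 <= e ^+ 2 by rewrite expr_ge1 // ltW.
have WW' x : W x <= e ^+ 2 * W' x.
  rewrite /W /W' /Wf.
  have := ler_pM (p00 _) (p10 _) (hq0 (z - t *: x)).2 (hq1 (z + (1 - t) *: x)).2.
  by move=> h; apply: le_trans h _; rewrite le_eqVlt; apply/orP; left; apply/eqP; ring.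
have W'W x : W' x <= e ^+ 2 * W x.
  rewrite /W /W' /Wf.
  have := ler_pM (q00 _) (q10 _) (hq0 (z - t *: x)).1 (hq1 (z + (1 - t) *: x)).1.
  by move=> h; apply: le_trans h _; rewrite le_eqVlt; apply/orP; left; apply/eqP; ring.
have C := @core R d W W' (diam Om) (e ^+ 2) (M0 * M1) mW mW' W0 WM Wsupp rho1 WW' W'W D0.
rewrite (@vel_eq q0 q1 t z (e ^+ 2 * (M0 * M1))) //; last first.
  move=> x; rewrite ger0_norm //; apply: le_trans (W'W x) _.
  by rewrite ler_pM2l ?exprn_gt0.
rewrite (@vel_eq p0 p1 t z (M0 * M1)) //; last first.
  by move=> x; rewrite ger0_norm.
rewrite -EFinM lee_fin.
have -> : expR (4 * r') = (e ^+ 2) ^+ 2 by rewrite -exprM expRM_natl.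
apply: le_trans C _.
have h0 : 0 <= diam Om * ((e ^+ 2) ^+ 2 - 1).
  by rewrite mulr_ge0 // subr_ge0 expr_ge1 // exprn_ge0 // ltW.
by rewrite -mulrA mulr2n mulrDl mul1r lerDr.
Qed.


Lemma rlog_ge0 p0 p1 q0 q1 : (0 <= rlog Om p0 p1 q0 q1)%E.
Proof.
have [a Oa] := hne.
apply: le_trans (ereal_sup_ubound _); last by exists a.
rewrite le_max; apply/orP; left.
by rewrite /lnratio; case: ifP => // _; rewrite lee_fin normr_ge0.
Qed.

End Main.
Lemma expR_bound (R : realType) (r : R) : 0 <= r -> r <= 1 ->
  expR (4 * r) - 1 <= 4 * expR 4 * r.
Proof.
move=> r0 r1.
have ep := expR_gt0 (4 * r).
have h1 : 1 - 4 * r <= (expR (4 * r))^-1.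
  rewrite -expRN; apply: le_trans (expR_ge1Dx _); exact: le_refl.
have h2 : (1 - 4 * r) * expR (4 * r) <= 1.
  by move: h1; rewrite -(ler_pM2r ep) mulVf ?gt_eqF.
have h3 : expR (4 * r) <= expR 4.
  by rewrite ler_expR ler_piMr.
have : expR (4 * r) - 1 <= 4 * r * expR (4 * r).
  by rewrite -subr_ge0; rewrite -subr_ge0 in h2; apply: le_trans h2 _;
    rewrite le_eqVlt; apply/orP; left; apply/eqP; ring.
move=> h; apply: le_trans h _.
have -> : 4 * expR 4 * r = 4 * r * expR 4 by ring.
by apply: ler_wpM2l => //; rewrite mulr_ge0.
Qed.

Theorem theorem11 (R : realType) (d : nat) (Om : set 'rV[R]_d)
  (p0 p1 : 'rV[R]_d -> R) :
  compact Om -> convex_rV Om -> interior Om !=set0 ->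
  good_density Om p0 -> good_density Om p1 ->
  (forall q0 q1 : 'rV[R]_d -> R,
     estimator Om q0 -> estimator Om q1 ->
     (supdiff Om p0 p1 q0 q1
       <= (2 * diam Om)%:E
          * (expeR (4%:E * rlog Om p0 p1 q0 q1) - 1%E))%E)
  /\
  (forall (dT : measure_display) (T : measurableType dT)
          (P : probability T R) (Q0 Q1 : nat -> T -> 'rV[R]_d -> R),
     (forall n w, estimator Om (Q0 n w) /\ estimator Om (Q1 n w)) ->
     o_p1 P (fun n w => rlog Om p0 p1 (Q0 n w) (Q1 n w)) ->
     O_p P (fun n w => supdiff Om p0 p1 (Q0 n w) (Q1 n w))
           (fun n w => rlog Om p0 p1 (Q0 n w) (Q1 n w))).
Proof.
move=> hc _ [z0 hz0] g0 g1.
have hne : Om !=set0 by exists z0; exact: interior_subset.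
split; first by move=> q0 q1 e0 e1; exact: part1.
move=> dT T P Q0 Q1 hest hop eps eps0.
have D0 : 0 <= diam Om := @diam_ge0 R d Om hc hne.
set M := 8 * diam Om * expR 4 + 1.
have M0 : 0 < M by rewrite ltr_wpDl // mulr_ge0 // ?mulr_ge0 // ltW // expR_gt0.
exists M; split => //.
have := hop 1 ltr01.
move=> /(_ [set y | (y < eps%:E)%E]) [].
  exact: (@nbhs_open_ereal_lt R 0 (fun _ => eps) eps0).
move=> N _ hN; exists N => n hn.
apply: le_trans (ltW (hN n hn)).
rewrite /outerP; apply: le_ereal_inf => _ [B [mB sB] <-]; exists B => //.
split => // w /= hw; apply: sB => /=.
have [e0 e1] := hest n w.
have := @part1 R d Om hc hne _ _ _ _ g0 g1 e0 e1.
move: hw (@rlog_ge0 R d Om hne p0 p1 (Q0 n w) (Q1 n w)).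
case: (rlog Om p0 p1 (Q0 n w) (Q1 n w)) => [r| |] //= hw r0 hp; last first.
  by rewrite ltry.
rewrite lee_fin in r0; rewrite lte_fin; rewrite ltNge; apply/negP => r1.
have := lt_le_trans hw hp; rewrite -EFinM lte_fin => hlt.
move: hlt; apply/negP; rewrite -leNgt.
apply: le_trans (_ : 2 * diam Om * (4 * expR 4 * r) <= M * r).
  by apply: ler_wpM2l; [rewrite mulr_ge0 | exact: expR_bound].
apply: (@le_trans _ _ (8 * diam Om * expR 4 * r)).
  by rewrite le_eqVlt; apply/orP; left; apply/eqP; ring.
rewrite /M -subr_ge0.
have -> : (8 * diam Om * expR 4 + 1) * r - 8 * diam Om * expR 4 * r = r by ring.
exact: r0.
Qed.
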